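(* Let $n\ge2$ and $k\ge1$ be integers, and let $(S^n,g_0)$ be the round unit sphere $S^n\subset\mathbb{R}^{n+1}$. Let $x^0,\dots,x^n$ be the restrictions to $S^n$ of the standard coordinates of $\mathbb{R}^{n+1}$. Then for all $u\in C^\infty(S^n)$, \[ \sum_{i=0}^n x^i\bigl(L_{2k}(x^iu) - x^iL_{2k}(u)\bigr) = k(n+2k-2)\,L_{2k-2}u . \]
   Context: $\Delta$ is the (nonpositive) Laplace–Beltrami operator of $g_0$. For an integer $m\ge1$, $L_{2m}:=\prod_{j=1}^m\bigl(-\Delta+\tfrac{(n-2j)(n+2j-2)}{4}\bigr)$ (the GJMS operator on the round sphere), and $L_0$ is the identity operator. *)

(* Defs.v *)
From Stdlib Require Import Reals Lra List ClassicalEpsilon.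
Open Scope R_scope.

(* Points of R^{n+1} are represented as functions nat -> R; only the
   coordinates 0..n are meaningful (the others are forced to 0 below). *)
Definition vec := nat -> R.

Definition nrm (n : nat) (y : vec) : R := sqrt (sum_f_R0 (fun j => (y j)^2) n).

Definition on_sphere (n : nat) (x : vec) : Prop :=
  sum_f_R0 (fun j => (x j)^2) n = 1 /\ (forall j, (n < j)%nat -> x j = 0).

Definition nonzero (n : nat) (y : vec) : Prop := exists j, (j <= n)%nat /\ y j <> 0.

Definition upd (y : vec) (i : nat) (t : R) : vec :=
  fun j => if Nat.eq_dec j i then t else y j.

(* derivative of a real function (0 where it does not exist) *)
Definition Deriv (g : R -> R) (t : R) : R :=
  match excluded_middle_informative (exists l, derivable_pt_lim g t l) with
  | left H => proj1_sig (constructive_indefinite_description _ H)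
  | right _ => 0
  end.

Definition partial (i : nat) (f : vec -> R) : vec -> R :=
  fun y => Deriv (fun t => f (upd y i t)) (y i).

Definition ext (n : nat) (u : vec -> R) : vec -> R :=
  fun y => u (fun j => if Nat.leb j n then y j / nrm n y else 0).

(* Laplace-Beltrami operator of the round metric on S^n (nonpositive):
   Delta_{S^n} u = Delta_{R^{n+1}} (u(y/|y|)) restricted to S^n. *)
Definition lapS (n : nat) (u : vec -> R) : vec -> R :=
  fun x => sum_f_R0 (fun i => partial i (partial i (ext n u)) x) n.

(* GJMS operator L_{2k} = prod_{j=1}^k (-Delta + (n-2j)(n+2j-2)/4), L_0 = id *)
Fixpoint GJMS (n k : nat) (u : vec -> R) : vec -> R :=
  match k with
  | O => u
  | S k' =>
      let v := GJMS n k' u in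
      let c := (INR n - 2 * INR k) * (INR n + 2 * INR k - 2) / 4 in
      fun x => - lapS n v x + c * v x
  end.

Definition iterD (l : list nat) (f : vec -> R) : vec -> R :=
  fold_right (fun i g => partial i g) f l.

Definition cont_at (n : nat) (f : vec -> R) (y : vec) : Prop :=
  forall eps, 0 < eps -> exists delta, 0 < delta /\
    forall z, (forall j, (j <= n)%nat -> Rabs (z j - y j) < delta) ->
              (forall j, (n < j)%nat -> z j = y j) ->
              Rabs (f z - f y) < eps.

Definition smooth_punctured (n : nat) (f : vec -> R) : Prop :=
  forall (l : list nat), Forall (fun i => (i <= n)%nat) l ->
  forall y, nonzero n y -> (forall j, (n < j)%nat -> y j = 0) ->
    cont_at n (iterD l f) y /\
    forall i, (i <= n)%nat -> exists d, derivable_pt_lim (fun t => iterD l f (upd y i t)) (y i) d.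

(* u in C^infty(S^n) iff its 0-homogeneous extension is C^infty on R^{n+1}\{0} *)
Definition smooth_sphere (n : nat) (u : vec -> R) : Prop := smooth_punctured n (ext n u).

Definition mulx (i : nat) (u : vec -> R) : vec -> R := fun x => x i * u x.

(* Main.v *)
Require Import Defs.
From Stdlib Require Import Reals Lra Lia List ClassicalEpsilon FunctionalExtensionality.
From Coquelicot Require Coquelicot.
Open Scope R_scope.

Module A.


Lemma Deriv_eq (g : R -> R) t l : derivable_pt_lim g t l -> Deriv g t = l.
Proof.
  intro H. unfold Deriv.
  destruct (excluded_middle_informative _) as [H1|H1].
  - destruct (constructive_indefinite_description _ H1) as [l' Hl']; simpl.
    exact (uniqueness_limite _ _ _ _ Hl' H).
  - exfalso; apply H1; eauto.
Qed.

Definition near (t0 : R) (P : R -> Prop) := exists d, 0 < d /\ forall t, Rabs (t - t0) < d -> P t.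

Lemma derivable_local (g h : R -> R) t0 l :
  near t0 (fun t => g t = h t) -> derivable_pt_lim g t0 l -> derivable_pt_lim h t0 l.
Proof.
  intros [d [Hd E]] H eps Heps.
  destruct (H eps Heps) as [del Hdel].
  assert (Hm : 0 < Rmin del d) by (apply Rmin_pos; [apply cond_pos|lra]).
  exists (mkposreal _ Hm). intros hh Hh0 Hh. simpl in Hh.
  rewrite <- !E.
  - apply Hdel; auto. apply Rlt_le_trans with (1:=Hh). apply Rmin_l.
  - rewrite Rminus_diag, Rabs_R0; lra.
  - replace (t0 + hh - t0) with hh by ring. apply Rlt_le_trans with (1:=Hh). apply Rmin_r.
Qed.

Lemma Deriv_local (g h : R -> R) t0 :
  near t0 (fun t => g t = h t) -> Deriv g t0 = Deriv h t0.
Proof.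
  intros Hn. unfold Deriv at 1.
  destruct (excluded_middle_informative _) as [H1|H1].
  - destruct (constructive_indefinite_description _ H1) as [l Hl]; simpl.
    symmetry; apply Deriv_eq. eapply derivable_local; eauto.
  - unfold Deriv. destruct (excluded_middle_informative _) as [H2|H2]; auto.
    exfalso. apply H1. destruct H2 as [l Hl]. exists l.
    eapply derivable_local; eauto.
    destruct Hn as [d [Hd E]]. exists d; split; auto. intros; symmetry; auto.
Qed.

Lemma near_shrink t0 t d : Rabs (t - t0) < d -> exists d', 0 < d' /\
  forall s, Rabs (s - t) < d' -> Rabs (s - t0) < d.
Proof.
  intros H. exists (d - Rabs (t - t0)); split; [lra|].
  intros s Hs. assert (Rabs (s - t0) <= Rabs (s - t) + Rabs (t - t0)).
  { replace (s - t0) with ((s - t) + (t - t0)) by ring. apply Rabs_triang. }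
  lra.
Qed.

Lemma Deriv_local2 (g h : R -> R) t0 :
  near t0 (fun t => g t = h t) -> near t0 (fun t => Deriv g t = Deriv h t).
Proof.
  intros [d [Hd E]]. exists d; split; auto. intros t Ht.
  apply Deriv_local. destruct (near_shrink _ _ _ Ht) as [d' [Hd' H']].
  exists d'; split; auto.
Qed.

Lemma near_and t0 P Q : near t0 P -> near t0 Q -> near t0 (fun t => P t /\ Q t).
Proof.
  intros [d1 [H1 P1]] [d2 [H2 Q2]]. exists (Rmin d1 d2); split.
  apply Rmin_pos; auto. intros t Ht; split.
  apply P1; eapply Rlt_le_trans; [exact Ht|apply Rmin_l].
  apply Q2; eapply Rlt_le_trans; [exact Ht|apply Rmin_r].
Qed.

Lemma near_mono t0 (P Q : R -> Prop) : (forall t, P t -> Q t) -> near t0 P -> near t0 Q.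
Proof. intros H [d [Hd Hp]]; exists d; split; auto. Qed.

Lemma near_self t0 P : near t0 P -> P t0.
Proof. intros [d [Hd H]]; apply H; rewrite Rminus_diag, Rabs_R0; auto. Qed.

Lemma D2_mult (a g a1 g1 : R -> R) (t0 a2 g2 : R) :
  near t0 (fun t => derivable_pt_lim a t (a1 t) /\ derivable_pt_lim g t (g1 t)) ->
  derivable_pt_lim a1 t0 a2 -> derivable_pt_lim g1 t0 g2 ->
  Deriv (Deriv (fun t => a t * g t)) t0 = a2 * g t0 + 2 * a1 t0 * g1 t0 + a t0 * g2.
Proof.
  intros Hn Ha Hg.
  rewrite (Deriv_local _ (fun t => a1 t * g t + a t * g1 t)).
  - apply Deriv_eq.
    destruct (near_self _ _ Hn) as [Ha0 Hg0].
    replace (a2 * g t0 + 2 * a1 t0 * g1 t0 + a t0 * g2) with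
      ((a2 * g t0 + a1 t0 * g1 t0) + (a1 t0 * g1 t0 + a t0 * g2)) by ring.
    apply (derivable_pt_lim_plus (fun t => a1 t * g t) (fun t => a t * g1 t)).
    + apply (derivable_pt_lim_mult a1 g). auto. auto.
    + apply (derivable_pt_lim_mult a g1). auto. auto.
  - eapply near_mono; [|exact Hn]. intros t [H1 H2]. apply Deriv_eq.
    apply (derivable_pt_lim_mult a g); auto.
Qed.

Lemma upd_same y i t : upd y i t i = t.
Proof. unfold upd; destruct (Nat.eq_dec i i); congruence. Qed.
Lemma upd_other y i t j : j <> i -> upd y i t j = y j.
Proof. intro; unfold upd; destruct (Nat.eq_dec j i); congruence. Qed.
Lemma upd_upd y i t s : upd (upd y i t) i s = upd y i s.
Proof. apply functional_extensionality; intro j; unfold upd; destruct (Nat.eq_dec j i); auto. Qed.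
Lemma upd_id y i : upd y i (y i) = y.
Proof. apply functional_extensionality; intro j; unfold upd; destruct (Nat.eq_dec j i); subst; auto. Qed.
Lemma upd_comm y i j a b : i <> j -> upd (upd y i a) j b = upd (upd y j b) i a.
Proof. intro; apply functional_extensionality; intro k; unfold upd;
  destruct (Nat.eq_dec k j); destruct (Nat.eq_dec k i); subst; auto; congruence. Qed.

Definition line (F : vec -> R) (y : vec) (i : nat) : R -> R := fun t => F (upd y i t).

Lemma partial_line i F y t : partial i F (upd y i t) = Deriv (line F y i) t.
Proof. unfold partial, line. rewrite upd_same. f_equal. apply functional_extensionality; intro s.
  rewrite upd_upd; auto. Qed.

Lemma line_partial i F y : line (partial i F) y i = Deriv (line F y i).
Proof. apply functional_extensionality; intro t. unfold line at 1. apply partial_line. Qed.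

Lemma partial2_eq i F y : partial i (partial i F) y = Deriv (Deriv (line F y i)) (y i).
Proof. unfold partial at 1. fold (line (partial i F) y i). rewrite line_partial; auto. Qed.

Lemma line_upd F y i t : line F (upd y i t) i = line F y i.
Proof. apply functional_extensionality; intro s; unfold line; rewrite upd_upd; auto. Qed.

End A.
Import A.

Module B.


Section Smooth.
Variable n : nat.

Definition V (y : vec) := Defs.nonzero n y /\ (forall j, (n < j)%nat -> y j = 0).
Definition close (y z : vec) (d : R) :=
  (forall j, (j <= n)%nat -> Rabs (z j - y j) < d) /\ (forall j, (n < j)%nat -> z j = y j).

Lemma V_open y : V y -> exists d, 0 < d /\ forall z, close y z d -> V z.
Proof.
  intros [[j [Hj Hy]] Ht]. exists (Rabs (y j)); split. apply Rabs_pos_lt; auto.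
  intros z [Hc1 Hc2]. split.
  - exists j; split; auto. intro Hz. specialize (Hc1 j Hj). rewrite Hz in Hc1.
    rewrite Rminus_0_l, Rabs_Ropp in Hc1. lra.
  - intros k Hk. rewrite Hc2; auto.
Qed.

Lemma close_upd y i t d : (i <= n)%nat -> 0 < d -> Rabs (t - y i) < d -> close y (upd y i t) d.
Proof.
  intros Hi Hd Ht. split.
  - intros j Hj. destruct (Nat.eq_dec j i). subst; rewrite upd_same; auto.
    rewrite upd_other; auto. rewrite Rminus_diag, Rabs_R0; auto.
  - intros j Hj. rewrite upd_other; auto. lia.
Qed.

Lemma line_V y i : V y -> (i <= n)%nat -> near (y i) (fun t => V (upd y i t)).
Proof.
  intros Hy Hi. destruct (V_open y Hy) as [d [Hd H]]. exists d; split; auto.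
  intros t Ht. apply H. apply close_upd; auto.
Qed.

Lemma line_V' y i t : V (upd y i t) -> (i <= n)%nat -> near t (fun s => V (upd y i s)).
Proof.
  intros Hy Hi. generalize (line_V _ i Hy Hi). rewrite upd_same.
  apply near_mono. intros s. rewrite upd_upd; auto.
Qed.

Definition EqV (F G : vec -> R) := forall y, V y -> F y = G y.

Lemma EqV_line F G y i : EqV F G -> V y -> (i <= n)%nat ->
  near (y i) (fun t => line F y i t = line G y i t).
Proof. intros E Hy Hi. eapply near_mono; [|apply (line_V y i Hy Hi)]. intros t Ht; apply E; auto. Qed.

Lemma partial_EqV F G i : EqV F G -> (i <= n)%nat -> EqV (partial i F) (partial i G).
Proof. intros E Hi y Hy. unfold partial. fold (line F y i) (line G y i).
  apply Deriv_local. apply EqV_line; auto. Qed.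

Lemma EqV_refl F : EqV F F. Proof. intros y _; auto. Qed.
Lemma EqV_sym F G : EqV F G -> EqV G F. Proof. intros E y Hy; symmetry; auto. Qed.
Lemma EqV_trans F G H : EqV F G -> EqV G H -> EqV F H.
Proof. intros E1 E2 y Hy; rewrite E1; auto. Qed.

Definition DL (F : vec -> R) y i := exists d, derivable_pt_lim (line F y i) (y i) d.

Lemma DL_partial F y i : DL F y i -> derivable_pt_lim (line F y i) (y i) (partial i F y).
Proof. intros [d Hd]. unfold partial; fold (line F y i). rewrite (Deriv_eq _ _ _ Hd); auto. Qed.

Lemma DL_EqV F G y i : EqV F G -> V y -> (i <= n)%nat -> DL F y i -> DL G y i.
Proof. intros E Hy Hi [d Hd]. exists d. eapply derivable_local; [|exact Hd]. apply EqV_line; auto. Qed.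

Lemma cont_EqV F G y : EqV F G -> V y -> cont_at n F y -> cont_at n G y.
Proof.
  intros E Hy C eps Heps. destruct (C eps Heps) as [d [Hd H]].
  destruct (V_open y Hy) as [d2 [Hd2 H2]].
  exists (Rmin d d2); split. apply Rmin_pos; auto.
  intros z Hz1 Hz2. rewrite <- (E z), <- (E y); auto.
  - apply H; auto. intros j Hj. eapply Rlt_le_trans; [apply Hz1; auto|apply Rmin_l].
  - apply H2. split; auto. intros j Hj. eapply Rlt_le_trans; [apply Hz1; auto|apply Rmin_r].
Qed.

Definition Sm0 (F : vec -> R) := forall y, V y -> cont_at n F y /\ forall i, (i <= n)%nat -> DL F y i.

Fixpoint Sm (N : nat) (F : vec -> R) : Prop :=
  match N with
  | O => Sm0 F
  | S N' => Sm0 F /\ forall i, (i <= n)%nat -> Sm N' (partial i F)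
  end.

Definition Smooth F := forall N, Sm N F.

Lemma Sm_Sm0 N F : Sm N F -> Sm0 F.
Proof. destruct N; simpl; tauto. Qed.

Lemma Sm_mono N F : Sm (S N) F -> Sm N F.
Proof.
  revert F; induction N; intros F H; simpl in *. tauto.
  destruct H as [H0 H1]. split; auto.
Qed.

Lemma Sm_le N M F : (M <= N)%nat -> Sm N F -> Sm M F.
Proof. induction 1; auto. intro; apply IHle; apply Sm_mono; auto. Qed.

Lemma Sm0_EqV F G : EqV F G -> Sm0 F -> Sm0 G.
Proof. intros E H y Hy. destruct (H y Hy) as [H1 H2]. split.
  eapply cont_EqV; eauto. intros i Hi; eapply DL_EqV; eauto. Qed.

Lemma Sm_EqV N F G : EqV F G -> Sm N F -> Sm N G.
Proof.
  revert F G; induction N; intros F G E H; simpl in *.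
  - eapply Sm0_EqV; eauto.
  - destruct H as [H0 H1]. split. eapply Sm0_EqV; eauto.
    intros i Hi. apply (IHN (partial i F)); auto. apply partial_EqV; auto.
Qed.

Lemma Smooth_EqV F G : EqV F G -> Smooth F -> Smooth G.
Proof. intros E H N; eapply Sm_EqV; eauto. Qed.

Lemma Smooth_partial F i : (i <= n)%nat -> Smooth F -> Smooth (partial i F).
Proof. intros Hi H N. apply (H (S N)); auto. Qed.

Lemma Smooth_Sm0 F : Smooth F -> Sm0 F.
Proof. intro H; apply (H O). Qed.

Lemma cont2_gen (op : R -> R -> R) a0 b0 :
  (forall eps, 0 < eps -> exists e, 0 < e /\ forall a b, Rabs (a - a0) < e -> Rabs (b - b0) < e ->
      Rabs (op a b - op a0 b0) < eps) ->
  forall F G y, F y = a0 -> G y = b0 -> cont_at n F y -> cont_at n G y ->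
  cont_at n (fun z => op (F z) (G z)) y.
Proof.
  intros Hop F G y HF HG CF CG eps Heps.
  destruct (Hop eps Heps) as [e [He Hop']].
  destruct (CF e He) as [d1 [Hd1 H1]]. destruct (CG e He) as [d2 [Hd2 H2]].
  exists (Rmin d1 d2); split. apply Rmin_pos; auto.
  intros z Hz1 Hz2. rewrite HF, HG. apply Hop'.
  - rewrite <- HF. apply H1; auto. intros j Hj; eapply Rlt_le_trans; [apply Hz1; auto|apply Rmin_l].
  - rewrite <- HG. apply H2; auto. intros j Hj; eapply Rlt_le_trans; [apply Hz1; auto|apply Rmin_r].
Qed.

Lemma cont_plus F G y : cont_at n F y -> cont_at n G y -> cont_at n (fun z => F z + G z) y.
Proof.
  intros. apply (cont2_gen Rplus (F y) (G y)); auto.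
  intros eps Heps. exists (eps/2); split; [lra|]. intros a b Ha Hb.
  replace (a + b - (F y + G y)) with ((a - F y) + (b - G y)) by ring.
  eapply Rle_lt_trans; [apply Rabs_triang|lra].
Qed.

Lemma cont_mult F G y : cont_at n F y -> cont_at n G y -> cont_at n (fun z => F z * G z) y.
Proof.
  intros. apply (cont2_gen Rmult (F y) (G y)); auto.
  intros eps Heps. set (M := 1 + Rabs (F y) + Rabs (G y)).
  assert (HM : 0 < M) by (unfold M; generalize (Rabs_pos (F y)) (Rabs_pos (G y)); lra).
  exists (Rmin 1 (eps / (2 * M))); split.
  { apply Rmin_pos. lra. apply Rdiv_lt_0_compat; lra. }
  intros a b Ha Hb.
  assert (Ha1 : Rabs (a - F y) < 1) by (eapply Rlt_le_trans; [exact Ha|apply Rmin_l]).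
  assert (Ha2 : Rabs (a - F y) < eps / (2*M)) by (eapply Rlt_le_trans; [exact Ha|apply Rmin_r]).
  assert (Hb1 : Rabs (b - G y) < 1) by (eapply Rlt_le_trans; [exact Hb|apply Rmin_l]).
  assert (Hb2 : Rabs (b - G y) < eps / (2*M)) by (eapply Rlt_le_trans; [exact Hb|apply Rmin_r]).
  replace (a * b - F y * G y) with ((a - F y) * (b - G y) + F y * (b - G y) + G y * (a - F y)) by ring.
  set (u := a - F y) in *. set (v := b - G y) in *.
  assert (Rabs (u * v + F y * v + G y * u) <= Rabs u * Rabs v + Rabs (F y) * Rabs v + Rabs (G y) * Rabs u).
  { rewrite <- !Rabs_mult. eapply Rle_trans; [apply Rabs_triang|].
    apply Rplus_le_compat_r. apply Rabs_triang. }
  assert (Rabs u * Rabs v <= Rabs u) by (generalize (Rabs_pos u); nra).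
  assert (Rabs (F y) * Rabs v <= Rabs (F y) * (eps/(2*M))) by (apply Rmult_le_compat_l; [apply Rabs_pos|lra]).
  assert (Rabs (G y) * Rabs u <= Rabs (G y) * (eps/(2*M))) by (apply Rmult_le_compat_l; [apply Rabs_pos|lra]).
  assert (M * (eps / (2*M)) = eps/2) by (field; lra).
  unfold M in *. nra.
Qed.

Lemma cont_const c y : cont_at n (fun _ => c) y.
Proof. intros eps Heps; exists 1; split; [lra|]. intros; rewrite Rminus_diag, Rabs_R0; auto. Qed.

Lemma cont_coord j y : cont_at n (fun z => z j) y.
Proof.
  intros eps Heps; exists eps; split; auto. intros z H1 H2.
  destruct (Compare_dec.le_lt_dec j n). apply H1; auto. rewrite H2; auto. rewrite Rminus_diag, Rabs_R0; auto.
Qed.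

Lemma cont_comp (phi : R -> R) F y : cont_at n F y -> continuity_pt phi (F y) ->
  cont_at n (fun z => phi (F z)) y.
Proof.
  intros CF Cphi eps Heps.
  destruct (Cphi eps Heps) as [e [He H]].
  destruct (CF e He) as [d [Hd H1]]. exists d; split; auto.
  intros z Hz1 Hz2. destruct (Req_dec (F z) (F y)) as [E|E].
  - rewrite E, Rminus_diag, Rabs_R0; auto.
  - apply (H (F z)). split. split; [exact I|auto]. simpl; unfold R_dist; apply H1; auto.
Qed.

Lemma DL_plus F G y i : DL F y i -> DL G y i -> DL (fun z => F z + G z) y i.
Proof. intros [a Ha] [b Hb]; exists (a + b). apply (derivable_pt_lim_plus (line F y i) (line G y i)); auto. Qed.
Lemma DL_mult F G y i : DL F y i -> DL G y i -> DL (fun z => F z * G z) y i.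
Proof. intros [a Ha] [b Hb]; eexists. apply (derivable_pt_lim_mult (line F y i) (line G y i)); eauto. Qed.

Lemma partial_plus_at F G y i : DL F y i -> DL G y i ->
  partial i (fun z => F z + G z) y = partial i F y + partial i G y.
Proof. intros HF HG. apply Deriv_eq.
  apply (derivable_pt_lim_plus (line F y i) (line G y i)); apply DL_partial; auto. Qed.
Lemma partial_mult_at F G y i : DL F y i -> DL G y i ->
  partial i (fun z => F z * G z) y = partial i F y * G y + F y * partial i G y.
Proof. intros HF HG. apply Deriv_eq.
  generalize (derivable_pt_lim_mult (line F y i) (line G y i) (y i) _ _ (DL_partial _ _ _ HF) (DL_partial _ _ _ HG)).
  unfold line, mult_fct; rewrite upd_id; auto. Qed.

Lemma Sm0_plus F G : Sm0 F -> Sm0 G -> Sm0 (fun z => F z + G z).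
Proof. intros HF HG y Hy. destruct (HF y Hy), (HG y Hy). split. apply cont_plus; auto.
  intros; apply DL_plus; auto. Qed.
Lemma Sm0_mult F G : Sm0 F -> Sm0 G -> Sm0 (fun z => F z * G z).
Proof. intros HF HG y Hy. destruct (HF y Hy), (HG y Hy). split. apply cont_mult; auto.
  intros; apply DL_mult; auto. Qed.

Lemma Sm_plus N : forall F G, Sm N F -> Sm N G -> Sm N (fun z => F z + G z).
Proof.
  induction N; intros F G HF HG; simpl in *. apply Sm0_plus; auto.
  destruct HF as [HF0 HF1], HG as [HG0 HG1]. split. apply Sm0_plus; auto.
  intros i Hi. eapply Sm_EqV; [|apply (IHN _ _ (HF1 i Hi) (HG1 i Hi))].
  intros y Hy. rewrite partial_plus_at; auto. apply HF0; auto. apply HG0; auto.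
Qed.

Lemma Sm_mult N : forall F G, Sm N F -> Sm N G -> Sm N (fun z => F z * G z).
Proof.
  induction N; intros F G HF HG; simpl in *. apply Sm0_mult; auto.
  destruct HF as [HF0 HF1], HG as [HG0 HG1]. split. apply Sm0_mult; auto.
  intros i Hi.
  assert (SF : Sm N F) by (apply Sm_mono; simpl; split; auto).
  assert (SG : Sm N G) by (apply Sm_mono; simpl; split; auto).
  eapply Sm_EqV; [|apply Sm_plus; [apply (IHN _ _ (HF1 i Hi) SG) | apply (IHN _ _ SF (HG1 i Hi))]].
  intros y Hy. rewrite partial_mult_at; auto. apply HF0; auto. apply HG0; auto.
Qed.
End Smooth.

End B.
Import B.

Module R1D.
Import Coquelicot.Coquelicot.

Lemma d_Rm A m t : 0 < A + t^2 ->
  derivable_pt_lim (fun t => (/ sqrt (A + t^2))^m) t (- INR m * t * (/ sqrt (A + t^2))^(m+2)).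
Proof.
  intros H. apply is_derive_Reals. replace (A + t^2) with (A + t * (t * 1)) by ring.
  assert (Hs: 0 < sqrt (A + t * (t * 1))) by (apply sqrt_lt_R0; lra).
  auto_derive. repeat split; lra.
  set (s := sqrt (A + t * (t * 1))) in *.
  destruct m. simpl. ring.
  simpl pred. rewrite pow_add. simpl. field. lra.
Qed.

Lemma d_sqrt A t : 0 < A + t^2 ->
  derivable_pt_lim (fun t => sqrt (A + t^2)) t (t * / sqrt (A + t^2)).
Proof.
  intros H. apply is_derive_Reals. replace (A + t^2) with (A + t * (t * 1)) by ring.
  assert (Hs: 0 < sqrt (A + t * (t * 1))) by (apply sqrt_lt_R0; lra).
  auto_derive. repeat split; lra. field. lra.
Qed.

Lemma d_poly2 A t : derivable_pt_lim (fun t => A + t^2) t (2 * t).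
Proof. apply is_derive_Reals. auto_derive; auto. ring. Qed.

Lemma d_R1a A t : 0 < A + t^2 ->
  derivable_pt_lim (fun t => t / sqrt (A + t^2)) t (A * (/ sqrt (A + t^2))^3).
Proof.
  intros H. apply is_derive_Reals. replace (A + t^2) with (A + t * (t * 1)) by ring.
  assert (Hs: 0 < sqrt (A + t * (t * 1))) by (apply sqrt_lt_R0; lra).
  assert (Hs2 : sqrt (A + t * (t * 1)) * sqrt (A + t * (t * 1)) = A + t * (t*1)) by (apply sqrt_sqrt; lra).
  auto_derive. repeat split; lra.
  set (s := sqrt (A + t * (t * 1))) in *. clearbody s.
  replace A with (s*s - t*(t*1)) by lra. field. lra.
Qed.

Lemma d_R1a' A t : 0 < A + t^2 ->
  derivable_pt_lim (fun t => A * (/ sqrt (A + t^2))^3) t (- 3 * A * t * (/ sqrt (A + t^2))^5).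
Proof.
  intros H. generalize (d_Rm A 3 t H). intro D.
  replace (-3 * A * t * (/ sqrt (A + t ^ 2)) ^ 5) with (A * (- INR 3 * t * (/ sqrt (A + t ^ 2)) ^ (3+2))).
  apply (derivable_pt_lim_scal (fun t => (/ sqrt (A + t^2))^3)). auto.
  simpl. ring.
Qed.

Lemma d_R1b A c t : 0 < A + t^2 ->
  derivable_pt_lim (fun t => c / sqrt (A + t^2)) t (- c * t * (/ sqrt (A + t^2))^3).
Proof.
  intros H. generalize (d_Rm A 1 t H). intro D.
  replace (- c * t * (/ sqrt (A + t ^ 2)) ^ 3) with (c * (- INR 1 * t * (/ sqrt (A + t ^ 2)) ^ (1+2))) by (simpl; ring).
  assert (E : (fun t => c / sqrt (A + t^2)) = (fun t => c * (/ sqrt (A + t^2))^1)).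
  { apply FunctionalExtensionality.functional_extensionality; intro; unfold Rdiv; ring. }
  rewrite E. apply (derivable_pt_lim_scal (fun t => (/ sqrt (A + t^2))^1)). auto.
Qed.

Lemma d_R1b' A c t : 0 < A + t^2 ->
  derivable_pt_lim (fun t => - c * t * (/ sqrt (A + t^2))^3) t
     (- c * (/ sqrt (A + t^2))^3 + 3 * c * t^2 * (/ sqrt (A + t^2))^5).
Proof.
  intros H. generalize (d_Rm A 3 t H). intro D.
  assert (E : (fun t => - c * t * (/ sqrt (A + t^2))^3) = (fun t => (- c * t) * (/ sqrt (A + t^2))^3)) by reflexivity.
  replace (- c * (/ sqrt (A + t^2))^3 + 3 * c * t^2 * (/ sqrt (A + t^2))^5) with
    ((- c) * (/ sqrt (A + t^2))^3 + (- c * t) * (- INR 3 * t * (/ sqrt (A + t ^ 2)) ^ (3+2))) by (simpl; ring).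
  apply (derivable_pt_lim_mult (fun t => - c * t) (fun t => (/ sqrt (A + t^2))^3)); auto.
  apply is_derive_Reals; auto_derive; auto; ring.
Qed.

Lemma d_R2' A t : 0 < A + t^2 ->
  derivable_pt_lim (fun t => t * / sqrt (A + t^2)) t (A * (/ sqrt (A + t^2))^3).
Proof. intro H. apply (d_R1a A t H). Qed.

Lemma near_pos_poly A t0 : 0 < A + t0^2 -> exists d, 0 < d /\ forall t, Rabs (t - t0) < d -> 0 < A + t^2.
Proof.
  intros H. assert (C : continuity_pt (fun t => A + t^2) t0).
  { apply derivable_continuous_pt. exists (2*t0). apply d_poly2. }
  destruct (C (A + t0^2) H) as [d [Hd Hc]]. exists d; split; auto.
  intros t Ht. destruct (Req_dec t t0). subst; auto.
  assert (K := Hc t). simpl in K. unfold R_dist in K.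
  assert (Rabs (A + t^2 - (A + t0^2)) < A + t0^2) by (apply K; split; [split; [exact I|auto]|auto]).
  apply Rabs_def2 in H1. lra.
Qed.

Lemma d_isp m s : 0 < s -> exists l, derivable_pt_lim (fun s => (/ sqrt s)^m) s l.
Proof.
  intros H. assert (Hs : 0 < sqrt s) by (apply sqrt_lt_R0; auto).
  eexists. apply is_derive_Reals. auto_derive. repeat split; lra. reflexivity.
Qed.

Lemma d_hom c m : derivable_pt_lim (fun s => c / (1 + s)^m) 0 (- INR m * c).
Proof.
  apply is_derive_Reals. auto_derive. rewrite Rplus_0_r, pow1. lra.
  rewrite Rplus_0_r, pow1. destruct m; simpl; [ring|]. rewrite pow1. field.
Qed.

End R1D.
Import R1D.

Module C.

Section C.
Variable n : nat.
Local Notation V := (V n).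
Local Notation EqV := (EqV n).
Local Notation Sm := (Sm n).
Local Notation Sm0 := (Sm0 n).
Local Notation Smooth := (Smooth n).
Local Notation DL := (DL).

Lemma line_const c y i : line (fun _ => c) y i = fun _ => c.
Proof. reflexivity. Qed.

Lemma partial_const c i : partial i (fun _ => c) = fun _ => 0.
Proof. apply functional_extensionality; intro y. apply Deriv_eq. apply derivable_pt_lim_const. Qed.

Lemma Sm0_const c : Sm0 (fun _ => c).
Proof. intros y Hy; split. apply cont_const. intros i Hi; exists 0; apply derivable_pt_lim_const. Qed.

Lemma Smooth_const c : Smooth (fun _ => c).
Proof. intro N; revert c; induction N; intro c; simpl. apply Sm0_const.
  split. apply Sm0_const. intros i Hi; rewrite partial_const; auto. Qed.

Lemma line_coord j y i : line (fun z => z j) y i = fun t => if Nat.eq_dec j i then t else y j.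
Proof. apply functional_extensionality; intro t. unfold line, upd. auto. Qed.

Lemma partial_coord j i : partial i (fun z => z j) = fun _ => if Nat.eq_dec j i then 1 else 0.
Proof. apply functional_extensionality; intro y. unfold partial. fold (line (fun z => z j) y i).
  rewrite line_coord. apply Deriv_eq. destruct (Nat.eq_dec j i).
  apply derivable_pt_lim_id. apply derivable_pt_lim_const. Qed.

Lemma Smooth_coord j : Smooth (fun z => z j).
Proof.
  intro N. destruct N; simpl.
  - intros y Hy; split. apply cont_coord. intros i Hi. unfold B.DL. exists (if Nat.eq_dec j i then 1 else 0). rewrite line_coord.
    destruct (Nat.eq_dec j i). apply derivable_pt_lim_id. apply derivable_pt_lim_const.
  - split. intros y Hy; split. apply cont_coord. intros i Hi. unfold B.DL. exists (if Nat.eq_dec j i then 1 else 0). rewrite line_coord.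
    destruct (Nat.eq_dec j i). apply derivable_pt_lim_id. apply derivable_pt_lim_const.
    intros i Hi. rewrite partial_coord. apply Smooth_const.
Qed.

Lemma Smooth_plus F G : Smooth F -> Smooth G -> Smooth (fun z => F z + G z).
Proof. intros HF HG N; apply Sm_plus; auto. Qed.
Lemma Smooth_mult F G : Smooth F -> Smooth G -> Smooth (fun z => F z * G z).
Proof. intros HF HG N; apply Sm_mult; auto. Qed.
Lemma Smooth_scal c F : Smooth F -> Smooth (fun z => c * F z).
Proof. intros HF. apply (Smooth_mult (fun _ => c)); auto. apply Smooth_const. Qed.
Lemma Smooth_ext F G : (forall z, F z = G z) -> Smooth F -> Smooth G.
Proof. intros E. apply Smooth_EqV. intros y _; auto. Qed.
Lemma Smooth_minus F G : Smooth F -> Smooth G -> Smooth (fun z => F z - G z).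
Proof. intros HF HG. apply (Smooth_ext (fun z => F z + (-1) * G z)). intro; ring.
  apply Smooth_plus; auto. apply Smooth_scal; auto. Qed.
Lemma Smooth_sum (G : nat -> vec -> R) m : (forall k, (k <= m)%nat -> Smooth (G k)) ->
  Smooth (fun z => sum_f_R0 (fun k => G k z) m).
Proof.
  induction m; intros H; simpl. apply H; auto.
  apply (Smooth_plus (fun z => sum_f_R0 (fun k => G k z) m)). apply IHm; auto. apply H; auto.
Qed.

Definition rho (y : vec) := sum_f_R0 (fun j => (y j)^2) n.

Lemma Smooth_rho : Smooth rho.
Proof. apply Smooth_sum. intros k _. apply (Smooth_ext (fun z => z k * z k)). intro; ring.
  apply Smooth_mult; apply Smooth_coord. Qed.

Lemma rho_upd_gen y i t m : sum_f_R0 (fun j => (upd y i t j)^2) m =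
  sum_f_R0 (fun j => (y j)^2) m + (if Compare_dec.le_lt_dec i m then t^2 - (y i)^2 else 0).
Proof.
  induction m.
  - simpl. unfold upd. destruct (Nat.eq_dec 0 i); destruct (Compare_dec.le_lt_dec i 0); subst; try lia; try ring.
  - rewrite !tech5, IHm. unfold upd at 1. destruct (Nat.eq_dec (S m) i); destruct (Compare_dec.le_lt_dec i m);
    destruct (Compare_dec.le_lt_dec i (S m)); subst; try lia; ring.
Qed.

Lemma rho_upd y i t : (i <= n)%nat -> rho (upd y i t) = rho y - (y i)^2 + t^2.
Proof. intros Hi. unfold rho. rewrite rho_upd_gen. destruct (Compare_dec.le_lt_dec i n); try lia; ring. Qed.

Lemma rho_nonneg y : 0 <= rho y.
Proof. unfold rho. apply cond_pos_sum. intro; apply pow2_ge_0. Qed.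

Lemma pow2_gt_0 x : x <> 0 -> 0 < x^2.
Proof. intro; rewrite <- Rsqr_pow2; apply Rsqr_pos_lt; auto. Qed.

Lemma sum_sq_pos y m j : (j <= m)%nat -> y j <> 0 -> 0 < sum_f_R0 (fun k => (y k)^2) m.
Proof.
  induction m; intros Hj Hy.
  - simpl. assert (j = 0%nat) by lia; subst. apply pow2_gt_0; auto.
  - rewrite tech5. destruct (Nat.eq_dec j (S m)). subst. 
    + assert (0 <= sum_f_R0 (fun k => (y k)^2) m) by (apply cond_pos_sum; intro; apply pow2_ge_0).
      generalize (pow2_gt_0 (y (S m)) Hy); lra.
    + generalize (IHm ltac:(lia) Hy) (pow2_ge_0 (y (S m))); lra.
Qed.

Lemma rho_pos y : V y -> 0 < rho y.
Proof. intros [[j [Hj Hy]] _]. apply (sum_sq_pos y n j); auto. Qed.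

Definition Rm (m : nat) (y : vec) := (/ sqrt (rho y))^m.

Lemma line_Rm m y i : (i <= n)%nat ->
  line (Rm m) y i = fun t => (/ sqrt ((rho y - (y i)^2) + t^2))^m.
Proof. intros Hi; apply functional_extensionality; intro t; unfold line, Rm. rewrite rho_upd; auto. Qed.

Lemma cont_inv_sqrt_pow m s : 0 < s -> continuity_pt (fun s => (/ sqrt s)^m) s.
Proof.
  intros Hs. destruct (d_isp m s Hs) as [l Hl].
  apply derivable_continuous_pt. exists l; auto.
Qed.

Lemma Sm0_Rm m : Sm0 (Rm m).
Proof.
  intros y Hy. split.
  - apply (cont_comp n (fun s => (/ sqrt s)^m) rho). apply (Smooth_Sm0 _ _ Smooth_rho); auto.
    apply cont_inv_sqrt_pow. apply rho_pos; auto.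
  - intros i Hi. eexists. rewrite line_Rm; auto. apply d_Rm.
    replace (rho y - y i ^ 2 + y i ^ 2) with (rho y) by ring. apply rho_pos; auto.
Qed.

Lemma partial_Rm m i : (i <= n)%nat -> EqV (partial i (Rm m)) (fun z => - INR m * z i * Rm (m+2) z).
Proof.
  intros Hi y Hy. unfold partial. fold (line (Rm m) y i). rewrite line_Rm; auto.
  apply Deriv_eq. generalize (d_Rm (rho y - y i ^ 2) m (y i)).
  replace (rho y - y i ^ 2 + y i ^ 2) with (rho y) by ring. intro D; apply D. apply rho_pos; auto.
Qed.

Lemma Smooth_Rm m : Smooth (Rm m).
Proof.
  intro N. revert m. induction N; intro m; simpl. apply Sm0_Rm.
  split. apply Sm0_Rm. intros i Hi. eapply Sm_EqV. apply EqV_sym, partial_Rm; auto.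
  apply Sm_mult; auto. apply Sm_mult. apply (Smooth_const (- INR m)). apply Smooth_coord.
Qed.

Lemma line_nrm y i : (i <= n)%nat -> line (nrm n) y i = fun t => sqrt ((rho y - (y i)^2) + t^2).
Proof. intros Hi; apply functional_extensionality; intro t. unfold line.
  change (sqrt (rho (upd y i t)) = sqrt (rho y - y i ^ 2 + t ^ 2)). rewrite rho_upd; auto. Qed.

Lemma d_nrm y i : V y -> (i <= n)%nat -> derivable_pt_lim (line (nrm n) y i) (y i) (y i * Rm 1 y).
Proof.
  intros Hy Hi. rewrite line_nrm; auto.
  replace (y i * Rm 1 y) with (y i * / sqrt (rho y - y i ^ 2 + y i ^ 2)).
  apply d_sqrt. replace (rho y - y i ^ 2 + y i ^ 2) with (rho y) by ring. apply rho_pos; auto.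
  unfold Rm. replace (rho y - y i ^ 2 + y i ^ 2) with (rho y) by ring. ring.
Qed.

Lemma Sm0_nrm : Sm0 (nrm n).
Proof.
  intros y Hy; split.
  - apply (cont_comp n sqrt rho). apply (Smooth_Sm0 _ _ Smooth_rho); auto.
    apply continuity_pt_sqrt; apply rho_nonneg.
  - intros i Hi. exists (y i * Rm 1 y). apply d_nrm; auto.
Qed.

Lemma Smooth_nrm : Smooth (nrm n).
Proof.
  intro N. destruct N; simpl. apply Sm0_nrm. split. apply Sm0_nrm.
  intros i Hi. apply (Sm_EqV n N (fun z => z i * Rm 1 z)).
  - intros y Hy. symmetry. apply Deriv_eq. apply d_nrm; auto.
  - apply Sm_mult. apply Smooth_coord. apply Smooth_Rm.
Qed.

End C.

End C.
Import C.

Module D.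

Section D.
Variable n : nat.
Local Notation V := (V n).
Local Notation EqV := (EqV n).
Local Notation Sm := (Sm n).
Local Notation Sm0 := (Sm0 n).
Local Notation Smooth := (Smooth n).
Local Notation rho := (rho n).
Local Notation Rm := (Rm n).

Definition scale (l : R) (y : vec) : vec := fun j => l * y j.

Lemma V_scale y l : V y -> l <> 0 -> V (scale l y).
Proof.
  intros [[j [Hj Hy]] Ht] Hl. split. exists j; split; auto. unfold scale. apply Rmult_integral_contrapositive; auto.
  intros k Hk; unfold scale; rewrite Ht; auto; ring.
Qed.

Lemma rho_scale y l : rho (scale l y) = l^2 * rho y.
Proof. unfold C.rho, scale. rewrite scal_sum. apply sum_eq; intros; ring. Qed.

Lemma nrm_rho y : nrm n y = sqrt (rho y).
Proof. reflexivity. Qed.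

Lemma nrm_pos y : V y -> 0 < nrm n y.
Proof. intro; apply sqrt_lt_R0, rho_pos; auto. Qed.

Lemma nrm_sq y : nrm n y * nrm n y = rho y.
Proof. apply sqrt_sqrt, rho_nonneg. Qed.

Lemma nrm_scale y l : 0 < l -> nrm n (scale l y) = l * nrm n y.
Proof.
  intros Hl. rewrite !nrm_rho, rho_scale, sqrt_mult. rewrite sqrt_pow2; lra.
  apply pow2_ge_0. apply rho_nonneg.
Qed.

Definition hat (y : vec) : vec := fun j => if Nat.leb j n then y j / nrm n y else 0.

Lemma ext_hat u y : ext n u y = u (hat y).
Proof. reflexivity. Qed.

Lemma hat_V y : V y -> hat y = scale (/ nrm n y) y.
Proof.
  intros [H1 H2]. apply functional_extensionality; intro j. unfold hat, scale.
  destruct (Nat.leb_spec j n). unfold Rdiv; ring. rewrite H2; auto; ring.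
Qed.

Lemma hat_scale y l : V y -> 0 < l -> hat (scale l y) = hat y.
Proof.
  intros Hy Hl. apply functional_extensionality; intro j. unfold hat.
  destruct (Nat.leb j n); auto. rewrite nrm_scale; auto. unfold scale. field.
  split. apply Rgt_not_eq, nrm_pos; auto. lra.
Qed.

Lemma ext_hom u y l : V y -> 0 < l -> ext n u (scale l y) = ext n u y.
Proof. intros; rewrite !ext_hat, hat_scale; auto. Qed.

Lemma sphere_V x : on_sphere n x -> V x.
Proof.
  intros [H1 H2]. split; auto. destruct (classic (exists j, (j <= n)%nat /\ x j <> 0)) as [H|H]; auto.
  exfalso. assert (E : sum_f_R0 (fun j => x j ^ 2) n = sum_f_R0 (fun _ => 0) n).
  { apply sum_eq. intros i Hi.
    destruct (Req_dec (x i) 0). rewrite H0; ring. exfalso; apply H; eauto. }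
  rewrite sum_cte in E. lra.
Qed.

Lemma sphere_rho x : on_sphere n x -> rho x = 1.
Proof. intros [H1 H2]; exact H1. Qed.

Lemma sphere_nrm x : on_sphere n x -> nrm n x = 1.
Proof. intros H; rewrite nrm_rho, sphere_rho; auto; apply sqrt_1. Qed.

Lemma sphere_hat x : on_sphere n x -> hat x = x.
Proof.
  intros H. apply functional_extensionality; intro j. unfold hat. rewrite sphere_nrm; auto.
  destruct (Nat.leb_spec j n). field. destruct H as [_ H]. rewrite H; auto.
Qed.

Lemma hat_sphere y : V y -> on_sphere n (hat y).
Proof.
  intros Hy. split.
  - rewrite hat_V; auto. change (rho (scale (/ nrm n y) y) = 1). rewrite rho_scale.
    rewrite <- nrm_sq. assert (0 < nrm n y) by (apply nrm_pos; auto). field. lra.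
  - intros j Hj. unfold hat. destruct (Nat.leb_spec j n); auto; lia.
Qed.

Definition HomN (m : nat) (F : vec -> R) := forall y l, V y -> 0 < l -> F (scale l y) = F y / l^m.

Lemma HomN_ext u : HomN 0 (ext n u).
Proof. intros y l Hy Hl. rewrite ext_hom; auto. simpl; field. Qed.

Lemma upd_scale y i l t : l <> 0 -> upd (scale l y) i t = scale l (upd y i (t / l)).
Proof. intros Hl. apply functional_extensionality; intro j. unfold upd, scale.
  destruct (Nat.eq_dec j i); auto. field; auto. Qed.

Lemma HomN_partial m F i : (i <= n)%nat -> HomN m F -> Sm0 F -> HomN (S m) (partial i F).
Proof.
  intros Hi HF S0 y l Hy Hl.
  unfold partial at 1. fold (line F (scale l y) i).
  assert (E : near (scale l y i) (fun t => line F (scale l y) i t = (fun t => line F y i (t / l) / l^m) t)).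
  { destruct (line_V n y i Hy Hi) as [d [Hd Hd']]. exists (l * d); split. nra.
    intros t Ht. unfold line. rewrite upd_scale; [|lra]. apply HF; [|auto].
    apply Hd'. unfold scale in Ht. replace (t / l - y i) with ((t - l * y i) / l) by (field; lra).
    unfold Rdiv; rewrite Rabs_mult, Rabs_inv, (Rabs_pos_eq l); [|lra].
    apply (Rmult_lt_reg_r l); [lra|]. rewrite Rmult_assoc, Rinv_l, Rmult_1_r; lra. }
  rewrite (Deriv_local _ _ _ E). apply Deriv_eq.
  destruct (S0 y Hy) as [_ D]. specialize (D i Hi). apply DL_partial in D.
  replace (partial i F y / l ^ S m) with ((partial i F y * / l) * / l^m).
  2:{ simpl. field. split; [apply pow_nonzero|]; lra. }
  apply (derivable_pt_lim_scal_right (fun t => line F y i (t / l))).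
  apply (derivable_pt_lim_comp (fun t => t / l) (line F y i)).
  - replace (/ l) with (1 * / l) by ring. apply (derivable_pt_lim_scal_right (fun t => t)).
    apply derivable_pt_lim_id.
  - replace (scale l y i / l) with (y i) by (unfold scale; field; lra). auto.
Qed.

Definition Dop (i : nat) (f : vec -> R) : vec -> R := fun x => partial i (ext n f) x.
Definition SS (f : vec -> R) := Smooth (ext n f).

Lemma ext_mulx i f y : (i <= n)%nat -> ext n (mulx i f) y = y i * Rm 1 y * ext n f y.
Proof.
  intros Hi. rewrite !ext_hat. unfold mulx, hat at 1, C.Rm. rewrite <- nrm_rho.
  destruct (Nat.leb_spec i n); [|lia]. simpl. unfold Rdiv. ring.
Qed.

Lemma HomN_pos m F y l : HomN m F -> V y -> 0 < l -> F y = F (scale l y) * l^m.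
Proof. intros H Hy Hl. rewrite H; auto. field. apply pow_nonzero; lra. Qed.

Lemma ext_Dop i f : (i <= n)%nat -> SS f ->
  EqV (ext n (Dop i f)) (fun y => nrm n y * partial i (ext n f) y).
Proof.
  intros Hi Hf y Hy. rewrite ext_hat. unfold Dop. rewrite hat_V; auto.
  rewrite (HomN_partial 0 (ext n f) i Hi (HomN_ext f) (Smooth_Sm0 _ _ Hf)); auto.
  2:{ apply Rinv_0_lt_compat, nrm_pos; auto. }
  assert (0 < nrm n y) by (apply nrm_pos; auto). simpl. field. lra.
Qed.

Lemma ext_lapS f : SS f ->
  EqV (ext n (lapS n f)) (fun y => rho y * sum_f_R0 (fun j => partial j (partial j (ext n f)) y) n).
Proof.
  intros Hf y Hy. rewrite ext_hat. unfold lapS. rewrite hat_V; auto.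
  assert (Hr : 0 < nrm n y) by (apply nrm_pos; auto).
  rewrite scal_sum. apply sum_eq. intros j Hj.
  assert (H2 : HomN 2 (partial j (partial j (ext n f)))).
  { apply HomN_partial; auto. apply HomN_partial; auto. apply HomN_ext. apply Smooth_Sm0; auto.
    apply Smooth_Sm0, Smooth_partial; auto. }
  rewrite H2; auto. 2: apply Rinv_0_lt_compat; auto.
  rewrite <- nrm_sq. simpl. field. lra.
Qed.

Lemma SS_mulx i f : (i <= n)%nat -> SS f -> SS (mulx i f).
Proof.
  intros Hi Hf. unfold SS. apply (Smooth_ext n (fun y => y i * Rm 1 y * ext n f y)).
  intro; rewrite ext_mulx; auto.
  apply Smooth_mult; auto. apply Smooth_mult. apply Smooth_coord. apply Smooth_Rm.
Qed.

Lemma SS_Dop i f : (i <= n)%nat -> SS f -> SS (Dop i f).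
Proof.
  intros Hi Hf. unfold SS. eapply Smooth_EqV. apply EqV_sym, ext_Dop; auto.
  apply Smooth_mult. apply Smooth_nrm. apply Smooth_partial; auto.
Qed.

Lemma SS_lapS f : SS f -> SS (lapS n f).
Proof.
  intros Hf. unfold SS. eapply Smooth_EqV. apply EqV_sym, ext_lapS; auto.
  apply Smooth_mult. apply Smooth_rho. apply Smooth_sum. intros j Hj.
  apply Smooth_partial; auto. apply Smooth_partial; auto.
Qed.

Lemma SS_lin a b f g : SS f -> SS g -> SS (fun x => a * f x + b * g x).
Proof.
  intros Hf Hg. unfold SS. apply (Smooth_plus n (fun y => a * ext n f y) (fun y => b * ext n g y));
  apply Smooth_scal; auto.
Qed.

Lemma SS_GJMS u k : SS u -> SS (GJMS n k u).
Proof.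
  intros Hu. induction k; [exact Hu|]. cbn [GJMS].
  apply (Smooth_ext n (fun y => (-1) * ext n (lapS n (GJMS n k u)) y
     + ((INR n - 2 * INR (S k)) * (INR n + 2 * INR (S k) - 2) / 4) * ext n (GJMS n k u) y)).
  intro y; unfold ext; cbv beta; ring.
  apply SS_lin; auto. apply SS_lapS; auto.
Qed.

End D.

End D.
Import D.

Module E.

Lemma mvt_between (h h' : R -> R) a b :
  (forall c, Rmin a b <= c <= Rmax a b -> derivable_pt_lim h c (h' c)) ->
  exists c, Rmin a b <= c <= Rmax a b /\ h b - h a = h' c * (b - a).
Proof.
  intros Hder. destruct (Rtotal_order a b) as [H|[H|H]].
  - assert (E1 : Rmin a b = a) by (apply Rmin_left; lra).
    assert (E2 : Rmax a b = b) by (apply Rmax_right; lra). rewrite E1, E2 in *.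
    assert (D' : forall c, a <= c <= b -> derivable_pt_lim h c (h' c)) by (intros c Hc; apply Hder; lra).
    destruct (MVT_cor2 h h' a b H D') as [c [E Hc]].
    exists c; split; [lra|auto].
  - subst. exists b. rewrite (Rmin_left b b) by lra. rewrite (Rmax_left b b) by lra. split; [lra|ring].
  - assert (E1 : Rmin a b = b) by (apply Rmin_right; lra).
    assert (E2 : Rmax a b = a) by (apply Rmax_left; lra). rewrite E1, E2 in *.
    assert (D' : forall c, b <= c <= a -> derivable_pt_lim h c (h' c)) by (intros c Hc; apply Hder; lra).
    destruct (MVT_cor2 h h' b a H D') as [c [E Hc]].
    exists c. split; [lra|]. lra.
Qed.

Lemma bound_fin (f : nat -> R) m : exists M, 0 < M /\ forall j, (j <= m)%nat -> f j <= M.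
Proof.
  induction m.
  - exists (Rmax 1 (f 0%nat)); split. apply Rlt_le_trans with 1; [lra|apply Rmax_l].
    intros j Hj. assert (j = 0%nat) by lia. subst. apply Rmax_r.
  - destruct IHm as [M [HM H]]. exists (Rmax M (f (S m))); split.
    apply Rlt_le_trans with M; [lra|apply Rmax_l].
    intros j Hj. destruct (Nat.eq_dec j (S m)). subst; apply Rmax_r.
    apply Rle_trans with M; [apply H; lia|apply Rmax_l].
Qed.

Fixpoint sumk (f : nat -> R) (k : nat) : R :=
  match k with O => 0 | S k => sumk f k + f k end.

Lemma sumk_sum f m : sumk f (S m) = sum_f_R0 f m.
Proof. induction m. simpl; ring. change (sumk f (S (S m))) with (sumk f (S m) + f (S m)). rewrite IHm. simpl; ring. Qed.

Section Chain.
Variable n : nat.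
Variable G : vec -> R.
Variable y w : vec.
Hypothesis HG0 : Sm0 n G.
Hypothesis HG1 : forall j, (j <= n)%nat -> Sm0 n (partial j G).
Hypothesis Hy : V n y.
Hypothesis Hw : forall j, (n < j)%nat -> w j = 0.

Definition pp (k : nat) (s : R) : vec := fun j => if Nat.ltb j k then y j + s * w j else y j.

Lemma pp_0 s : pp 0 s = y.
Proof. apply functional_extensionality; intro j. reflexivity. Qed.

Lemma pp_s0 k : pp k 0 = y.
Proof. apply functional_extensionality; intro j. unfold pp. destruct (Nat.ltb j k); ring. Qed.

Lemma pp_k k s : pp k s k = y k.
Proof. unfold pp; cbv beta. rewrite Nat.ltb_irrefl; auto. Qed.

Lemma pp_S k s : pp (S k) s = upd (pp k s) k (y k + s * w k).
Proof.
  apply functional_extensionality; intro j. unfold upd, pp.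
  destruct (Nat.eq_dec j k). subst. replace (Nat.ltb k (S k)) with true; auto.
  symmetry; apply Nat.ltb_lt; lia.
  destruct (Nat.ltb_spec j (S k)); destruct (Nat.ltb_spec j k); auto; lia.
Qed.

Lemma chain_term k : (k <= n)%nat -> forall eta, 0 < eta -> exists d, 0 < d /\ forall s, Rabs s < d ->
  Rabs (G (pp (S k) s) - G (pp k s) - s * w k * partial k G y) <= eta * Rabs s.
Proof.
  intros Hk eta Heta.
  destruct (bound_fin (fun j => Rabs (w j)) n) as [M [HM HMb]].
  destruct (V_open n y Hy) as [dV [HdV HV]].
  set (eta' := eta / (Rabs (w k) + 1)).
  assert (Heta' : 0 < eta') by (unfold eta'; apply Rdiv_lt_0_compat; [auto|generalize (Rabs_pos (w k)); lra]).
  destruct (HG1 k Hk y Hy) as [Cc _].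
  destruct (Cc eta' Heta') as [dc [Hdc Hcont]].
  exists (Rmin (dV / M) (dc / M)); split.
  { apply Rmin_pos; apply Rdiv_lt_0_compat; auto. }
  intros s Hs.
  assert (HsM1 : Rabs s * M < dV).
  { assert (Rabs s < dV / M) by (eapply Rlt_le_trans; [exact Hs|apply Rmin_l]).
    apply (Rmult_lt_compat_r M) in H; auto. unfold Rdiv in H. rewrite Rmult_assoc, Rinv_l in H; lra. }
  assert (HsM2 : Rabs s * M < dc).
  { assert (Rabs s < dc / M) by (eapply Rlt_le_trans; [exact Hs|apply Rmin_r]).
    apply (Rmult_lt_compat_r M) in H; auto. unfold Rdiv in H. rewrite Rmult_assoc, Rinv_l in H; lra. }
  set (z := pp k s).
  set (a := y k). set (b := y k + s * w k).
  assert (Hq : forall c, Rmin a b <= c <= Rmax a b ->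
     (forall j, (j <= n)%nat -> Rabs (upd z k c j - y j) <= Rabs s * M) /\
     (forall j, (n < j)%nat -> upd z k c j = y j)).
  { intros c Hc. split.
    - intros j Hj. unfold upd. destruct (Nat.eq_dec j k).
      + subst j. apply Rle_trans with (Rabs (s * w k)).
        * unfold a, b in Hc. apply Rabs_le. 
          destruct (Rle_dec 0 (s * w k)).
          -- rewrite Rmin_left, Rmax_right in Hc by lra. rewrite Rabs_pos_eq; lra.
          -- rewrite Rmin_right, Rmax_left in Hc by lra. rewrite Rabs_left; lra.
        * rewrite Rabs_mult. apply Rmult_le_compat_l. apply Rabs_pos. apply HMb; auto.
      + unfold z, pp. destruct (Nat.ltb j k).
        * replace (y j + s * w j - y j) with (s * w j) by ring. rewrite Rabs_mult.
          apply Rmult_le_compat_l. apply Rabs_pos. apply HMb; auto.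
        * rewrite Rminus_diag, Rabs_R0. apply Rmult_le_pos; [apply Rabs_pos|lra].
    - intros j Hj. unfold upd. destruct (Nat.eq_dec j k). lia. unfold z, pp.
      destruct (Nat.ltb_spec j k); auto. lia. }
  assert (HqV : forall c, Rmin a b <= c <= Rmax a b -> V n (upd z k c)).
  { intros c Hc. destruct (Hq c Hc) as [H1 H2]. apply HV. split; auto.
    intros j Hj. eapply Rle_lt_trans; [apply H1; auto|auto]. }
  destruct (mvt_between (line G z k) (fun c => partial k G (upd z k c)) a b) as [c [Hc E]].
  { intros c Hc. destruct (HG0 _ (HqV c Hc)) as [_ D]. specialize (D k Hk).
    apply DL_partial in D. rewrite line_upd, upd_same in D. rewrite partial_line. rewrite partial_line in D. auto. }
  unfold line in E.
  assert (Ez : upd z k a = z) by (unfold a; rewrite <- (pp_k k s); fold z; apply upd_id).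
  assert (Eb : upd z k b = pp (S k) s) by (unfold z, b; rewrite pp_S; auto).
  rewrite Ez, Eb in E. rewrite E. unfold b, a.
  replace (partial k G (upd z k c) * (y k + s * w k - y k) - s * w k * partial k G y) with
    ((partial k G (upd z k c) - partial k G y) * (s * w k)) by ring.
  rewrite Rabs_mult, Rabs_mult.
  assert (Hcl : Rabs (partial k G (upd z k c) - partial k G y) < eta').
  { destruct (Hq c Hc) as [H1 H2]. apply Hcont; auto. intros j Hj. eapply Rle_lt_trans; [apply H1; auto|auto]. }
  assert (eta' * Rabs (w k) <= eta).
  { unfold eta'. apply (Rmult_le_reg_r (Rabs (w k) + 1)). generalize (Rabs_pos (w k)); lra.
    unfold Rdiv. replace (eta * / (Rabs (w k) + 1) * Rabs (w k) * (Rabs (w k) + 1)) with (eta * Rabs (w k)).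
    generalize (Rabs_pos (w k)); nra. field. generalize (Rabs_pos (w k)); lra. }
  apply Rle_trans with (eta' * (Rabs s * Rabs (w k))).
  apply Rmult_le_compat_r. apply Rmult_le_pos; apply Rabs_pos. lra.
  replace (eta' * (Rabs s * Rabs (w k))) with (Rabs s * (eta' * Rabs (w k))) by ring.
  rewrite (Rmult_comm eta). apply Rmult_le_compat_l. apply Rabs_pos. auto.
Qed.

Lemma chain_sum k : (k <= S n)%nat -> forall eta, 0 < eta -> exists d, 0 < d /\ forall s, Rabs s < d ->
  Rabs (G (pp k s) - G y - s * sumk (fun j => w j * partial j G y) k) <= eta * INR k * Rabs s.
Proof.
  induction k; intros Hk eta Heta.
  - exists 1; split; [lra|]. intros s _. rewrite pp_0. simpl.
    replace (G y - G y - s * 0) with 0 by ring. rewrite Rabs_R0. lra.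
  - destruct (IHk ltac:(lia) eta Heta) as [d1 [Hd1 H1]].
    destruct (chain_term k ltac:(lia) eta Heta) as [d2 [Hd2 H2]].
    exists (Rmin d1 d2); split. apply Rmin_pos; auto.
    intros s Hs.
    assert (A1 := H1 s ltac:(eapply Rlt_le_trans; [exact Hs|apply Rmin_l])).
    assert (A2 := H2 s ltac:(eapply Rlt_le_trans; [exact Hs|apply Rmin_r])).
    change (sumk (fun j => w j * partial j G y) (S k)) with
      (sumk (fun j => w j * partial j G y) k + w k * partial k G y).
    replace (G (pp (S k) s) - G y - s * (sumk (fun j => w j * partial j G y) k + w k * partial k G y)) with
      ((G (pp k s) - G y - s * sumk (fun j => w j * partial j G y) k) +
       (G (pp (S k) s) - G (pp k s) - s * w k * partial k G y)) by ring.
    eapply Rle_trans; [apply Rabs_triang|]. rewrite S_INR. nra.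
Qed.

Lemma chain_deriv : derivable_pt_lim (fun s => G (pp (S n) s)) 0 (sum_f_R0 (fun j => w j * partial j G y) n).
Proof.
  intros eps Heps.
  assert (HN : 0 < INR (S n)) by (apply lt_0_INR; lia).
  set (eta := eps / (2 * INR (S n))).
  assert (Heta : 0 < eta) by (unfold eta; apply Rdiv_lt_0_compat; lra).
  destruct (chain_sum (S n) ltac:(lia) eta Heta) as [d [Hd H]].
  exists (mkposreal d Hd). intros h Hh0 Hh. simpl in Hh.
  rewrite Rplus_0_l, pp_s0. rewrite <- sumk_sum.
  specialize (H h Hh).
  replace ((G (pp (S n) h) - G y) / h - sumk (fun j => w j * partial j G y) (S n)) with
    ((G (pp (S n) h) - G y - h * sumk (fun j => w j * partial j G y) (S n)) / h) by (field; auto).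
  unfold Rdiv. rewrite Rabs_mult, Rabs_inv.
  assert (Hh1 : 0 < Rabs h) by (apply Rabs_pos_lt; auto).
  apply Rle_lt_trans with (eta * INR (S n) * Rabs h * / Rabs h).
  apply Rmult_le_compat_r. left; apply Rinv_0_lt_compat; auto. auto.
  replace (eta * INR (S n) * Rabs h * / Rabs h) with (eps / 2) by (unfold eta; field; lra). lra.
Qed.

End Chain.

Lemma euler n m G y : HomN n m G -> Sm n 1 G -> V n y ->
  sum_f_R0 (fun j => y j * partial j G y) n = - INR m * G y.
Proof.
  intros HH [S0 S1] Hy.
  assert (Hw : forall j, (n < j)%nat -> y j = 0) by (destruct Hy; auto).
  assert (D := chain_deriv n G y y S0 S1 Hy).
  apply (uniqueness_limite (fun s => G y / (1 + s)^m) 0); [|apply d_hom].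
  eapply derivable_local; [|exact D].
  exists 1; split; [lra|]. intros t Ht. rewrite Rminus_0_r in Ht.
  assert (E : pp y y (S n) t = scale (1 + t) y).
  { apply functional_extensionality; intro j. unfold pp, scale.
    destruct (Nat.ltb_spec j (S n)). ring. rewrite Hw; [ring|lia]. }
  rewrite E, HH; auto. apply Rabs_def2 in Ht; lra.
Qed.

End E.
Import E.

Module Sch.
Import Coquelicot.Coquelicot.

Definition QQ (y : vec) (a b : nat) (p q : R) : vec := upd (upd y a p) b q.

Lemma Derive_Deriv g t l : derivable_pt_lim g t l -> Derive g t = l.
Proof. intro H. apply is_derive_unique. apply is_derive_Reals; auto. Qed.

Section Sch.
Variable n : nat.
Variable G : vec -> R.
Variable y : vec.
Variables a b : nat.
Hypothesis Hab : a <> b.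
Hypothesis Ha : (a <= n)%nat.
Hypothesis Hb : (b <= n)%nat.
Hypothesis S0 : B.Sm0 n G.
Hypothesis S1 : B.Sm0 n (Defs.partial b G).
Variable d : R.
Hypothesis Hbox : forall p q, Rabs (p - y a) < d -> Rabs (q - y b) < d -> B.V n (QQ y a b p q).

Lemma QQ_comm p q : QQ y a b p q = upd (upd y b q) a p.
Proof. unfold QQ. apply upd_comm; auto. Qed.

Lemma mix_i p q : Rabs (p - y a) < d -> Rabs (q - y b) < d ->
  derivable_pt_lim (fun t => G (QQ y a b p t)) q (Defs.partial b G (QQ y a b p q)).
Proof.
  intros Hp Hq. destruct (S0 _ (Hbox p q Hp Hq)) as [_ D]. specialize (D b Hb).
  apply DL_partial in D. unfold QQ in *. rewrite upd_same in D.
  replace (fun t => G (upd (upd y a p) b t)) with (line G (upd (upd y a p) b q) b); auto.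
  apply functional_extensionality; intro t. unfold line. rewrite upd_upd; auto.
Qed.

Lemma mix_iii p q : Rabs (p - y a) < d -> Rabs (q - y b) < d ->
  derivable_pt_lim (fun z => G (QQ y a b z q)) p (Defs.partial a G (QQ y a b p q)).
Proof.
  intros Hp Hq. destruct (S0 _ (Hbox p q Hp Hq)) as [_ D]. specialize (D a Ha).
  apply DL_partial in D. rewrite QQ_comm in *. rewrite upd_same in D.
  replace (fun z => G (QQ y a b z q)) with (line G (upd (upd y b q) a p) a); auto.
  apply functional_extensionality; intro t. unfold line. rewrite upd_upd, QQ_comm; auto.
Qed.

Lemma mix_ii p q : Rabs (p - y a) < d -> Rabs (q - y b) < d ->
  derivable_pt_lim (fun z => Derive (fun t => G (QQ y a b z t)) q) p
     (Defs.partial a (Defs.partial b G) (QQ y a b p q)).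
Proof.
  intros Hp Hq. destruct (S1 _ (Hbox p q Hp Hq)) as [_ D]. specialize (D a Ha).
  apply DL_partial in D. rewrite QQ_comm in *. rewrite upd_same in D.
  eapply derivable_local; [|exact D].
  exists (d - Rabs (p - y a)); split; [lra|]. intros z Hz.
  assert (Hz' : Rabs (z - y a) < d).
  { assert (Rabs (z - y a) <= Rabs (z - p) + Rabs (p - y a)) by
      (replace (z - y a) with ((z - p) + (p - y a)) by ring; apply Rabs_triang). lra. }
  unfold line. rewrite upd_upd. rewrite <- QQ_comm. symmetry. apply Derive_Deriv. apply mix_i; auto.
Qed.

End Sch.

Lemma QQ_close n y a b p q dl : (a <= n)%nat -> (b <= n)%nat -> 0 < dl ->
  Rabs (p - y a) < dl -> Rabs (q - y b) < dl ->
  (forall k, (k <= n)%nat -> Rabs (QQ y a b p q k - y k) < dl) /\ (forall k, (n < k)%nat -> QQ y a b p q k = y k).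
Proof.
  intros Ha Hb Hd Hp Hq. unfold QQ, upd. split.
  - intros k Hk. destruct (Nat.eq_dec k b). subst; auto.
    destruct (Nat.eq_dec k a). subst; auto. rewrite Rminus_diag, Rabs_R0; auto.
  - intros k Hk. destruct (Nat.eq_dec k b). lia. destruct (Nat.eq_dec k a). lia. auto.
Qed.

Lemma QQ_id y a b : QQ y a b (y a) (y b) = y.
Proof. unfold QQ. rewrite upd_id. apply upd_id. Qed.

Lemma QQ_swap y a b p q : a <> b -> QQ y a b p q = QQ y b a q p.
Proof. intros; unfold QQ; apply upd_comm; auto. Qed.

Lemma schwarz n G y i j : B.Sm n 2 G -> B.V n y -> (i <= n)%nat -> (j <= n)%nat ->
  Defs.partial i (Defs.partial j G) y = Defs.partial j (Defs.partial i G) y.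
Proof.
  intros HS Hy Hi Hj. destruct (Nat.eq_dec i j) as [e|Hij]. subst; auto.
  destruct HS as [S0 HS1].
  destruct (HS1 i Hi) as [Si0 Si1]. destruct (HS1 j Hj) as [Sj0 Sj1].
  specialize (Si1 j Hj). specialize (Sj1 i Hi). simpl in Si1, Sj1.
  destruct (V_open n y Hy) as [dV [HdV HV]].
  assert (Hbox1 : forall p q, Rabs (p - y i) < dV -> Rabs (q - y j) < dV -> B.V n (QQ y i j p q)).
  { intros p q Hp Hq. apply HV. apply QQ_close; auto. }
  assert (Hbox2 : forall p q, Rabs (p - y j) < dV -> Rabs (q - y i) < dV -> B.V n (QQ y j i p q)).
  { intros p q Hp Hq. apply HV. apply QQ_close; auto. }
  assert (Ef : forall z, (fun t => G (QQ y i j t z)) = (fun t => G (QQ y j i z t))).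
  { intro z. apply functional_extensionality; intro t. rewrite QQ_swap; auto. }
  assert (H0 : Rabs (y i - y i) < dV) by (rewrite Rminus_diag, Rabs_R0; auto).
  assert (H0' : Rabs (y j - y j) < dV) by (rewrite Rminus_diag, Rabs_R0; auto).
  assert (K := Schwarz (fun u v => G (QQ y i j u v)) (y i) (y j)). cbv beta in K.
  rewrite (Derive_Deriv _ _ _ (mix_ii n G y i j Hij Hi Hj S0 Sj0 dV Hbox1 (y i) (y j) H0 H0')) in K.
  rewrite QQ_id in K.
  replace (fun z => Derive (fun t => G (QQ y i j t z)) (y i)) with (fun z => Derive (fun t => G (QQ y j i z t)) (y i)) in K
    by (apply functional_extensionality; intro z; rewrite Ef; auto).
  rewrite (Derive_Deriv _ _ _ (mix_ii n G y j i (not_eq_sym Hij) Hj Hi S0 Si0 dV Hbox2 (y j) (y i) H0' H0)) in K.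
  rewrite QQ_id in K. apply K.
  - exists (mkposreal dV HdV). intros u v Hu Hv. simpl in Hu, Hv. repeat split.
    + eexists; apply is_derive_Reals; apply (mix_iii n G y i j Hij Hi S0 dV Hbox1); auto.
    + eexists; apply is_derive_Reals; apply (mix_i n G y i j Hj S0 dV Hbox1); auto.
    + eexists; apply is_derive_Reals; apply (mix_ii n G y i j Hij Hi Hj S0 Sj0 dV Hbox1); auto.
    + rewrite (functional_extensionality _ _ (fun z => f_equal (fun g => Derive g u) (Ef z))).
      eexists; apply is_derive_Reals; apply (mix_ii n G y j i (not_eq_sym Hij) Hj Hi S0 Si0 dV Hbox2); auto.
  - intros eps. destruct (Sj1 y Hy) as [C _].
    destruct (C eps (cond_pos eps)) as [dc [Hdc Hc]].
    assert (Hm : 0 < Rmin dV dc) by (apply Rmin_pos; auto).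
    exists (mkposreal _ Hm). intros u v Hu Hv. simpl in Hu, Hv.
    assert (Hu1 : Rabs (u - y i) < dV) by (eapply Rlt_le_trans; [exact Hu|apply Rmin_l]).
    assert (Hv1 : Rabs (v - y j) < dV) by (eapply Rlt_le_trans; [exact Hv|apply Rmin_l]).
    assert (Hu2 : Rabs (u - y i) < dc) by (eapply Rlt_le_trans; [exact Hu|apply Rmin_r]).
    assert (Hv2 : Rabs (v - y j) < dc) by (eapply Rlt_le_trans; [exact Hv|apply Rmin_r]).
    rewrite (Derive_Deriv _ _ _ (mix_ii n G y i j Hij Hi Hj S0 Sj0 dV Hbox1 u v Hu1 Hv1)).
    rewrite (Derive_Deriv _ _ _ (mix_ii n G y i j Hij Hi Hj S0 Sj0 dV Hbox1 (y i) (y j) H0 H0')).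
    rewrite QQ_id. destruct (QQ_close n y i j u v dc Hi Hj Hdc Hu2 Hv2). apply Hc; auto.
  - intros eps. destruct (Si1 y Hy) as [C _].
    destruct (C eps (cond_pos eps)) as [dc [Hdc Hc]].
    assert (Hm : 0 < Rmin dV dc) by (apply Rmin_pos; auto).
    exists (mkposreal _ Hm). intros u v Hu Hv. simpl in Hu, Hv.
    assert (Hu1 : Rabs (u - y i) < dV) by (eapply Rlt_le_trans; [exact Hu|apply Rmin_l]).
    assert (Hv1 : Rabs (v - y j) < dV) by (eapply Rlt_le_trans; [exact Hv|apply Rmin_l]).
    assert (Hu2 : Rabs (u - y i) < dc) by (eapply Rlt_le_trans; [exact Hu|apply Rmin_r]).
    assert (Hv2 : Rabs (v - y j) < dc) by (eapply Rlt_le_trans; [exact Hv|apply Rmin_r]).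
    rewrite (functional_extensionality _ _ (fun z => f_equal (fun g => Derive g u) (Ef z))).
    rewrite (functional_extensionality _ _ (fun z => f_equal (fun g => Derive g (y i)) (Ef z))).
    rewrite (Derive_Deriv _ _ _ (mix_ii n G y j i (not_eq_sym Hij) Hj Hi S0 Si0 dV Hbox2 v u Hv1 Hu1)).
    rewrite (Derive_Deriv _ _ _ (mix_ii n G y j i (not_eq_sym Hij) Hj Hi S0 Si0 dV Hbox2 (y j) (y i) H0' H0)).
    rewrite QQ_id. destruct (QQ_close n y j i v u dc Hj Hi Hdc Hv2 Hu2). apply Hc; auto.
Qed.

End Sch.
Import Sch.

Module F.

Section F.
Variable n : nat.
Local Notation V := (V n).
Local Notation EqV := (EqV n).
Local Notation Sm := (Sm n).
Local Notation Sm0 := (Sm0 n).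
Local Notation Smooth := (Smooth n).
Local Notation rho := (rho n).
Local Notation Rm := (Rm n).
Local Notation SS := (SS n).
Local Notation Dop := (Dop n).


Lemma D2_data F x j : Sm0 F -> Sm0 (partial j F) -> V x -> (j <= n)%nat ->
  near (x j) (fun t => derivable_pt_lim (line F x j) t (Deriv (line F x j) t)) /\
  derivable_pt_lim (Deriv (line F x j)) (x j) (partial j (partial j F) x).
Proof.
  intros S0 S1 Hx Hj. split.
  - eapply near_mono; [|apply (line_V n x j Hx Hj)]. intros t Ht.
    destruct (S0 _ Ht) as [_ D]. specialize (D j Hj). apply DL_partial in D.
    rewrite line_upd, upd_same in D. rewrite partial_line in D. auto.
  - destruct (S1 _ Hx) as [_ D]. specialize (D j Hj). apply DL_partial in D.
    rewrite line_partial in D. auto.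
Qed.

Lemma D2_local g h t0 : near t0 (fun t => g t = h t) -> Deriv (Deriv g) t0 = Deriv (Deriv h) t0.
Proof. intros H. apply Deriv_local. apply Deriv_local2; auto. Qed.

Lemma near_pos A t0 : 0 < A + t0^2 -> near t0 (fun t => 0 < A + t^2).
Proof. intros H. destruct (near_pos_poly A t0 H) as [d [Hd H']]. exists d; split; auto. Qed.

Lemma line_mulx i f x j : (i <= n)%nat -> (j <= n)%nat -> on_sphere n x ->
  line (ext n (mulx i f)) x j = fun t => (upd x j t i * / sqrt ((1 - x j ^2) + t^2)) * line (ext n f) x j t.
Proof.
  intros Hi Hj Hx. apply functional_extensionality; intro t; unfold line.
  rewrite ext_mulx; auto. unfold C.Rm. rewrite rho_upd, sphere_rho; auto. ring.
Qed.

Lemma sqrt1' A t : A + t^2 = 1 -> / sqrt (A + t^2) = 1.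
Proof. intro H; rewrite H, sqrt_1; apply Rinv_1. Qed.

Lemma R1_term i f x j : (i <= n)%nat -> (j <= n)%nat -> on_sphere n x -> SS f ->
  partial j (partial j (ext n (mulx i f))) x =
    (- x i + 3 * x i * x j ^ 2 - (if Nat.eq_dec j i then 2 * x j else 0)) * ext n f x
    + 2 * ((if Nat.eq_dec j i then 1 else 0) - x i * x j) * partial j (ext n f) x
    + x i * partial j (partial j (ext n f)) x.
Proof.
  intros Hi Hj Hx Hf. rewrite partial2_eq, line_mulx; auto.
  assert (HV : V x) by (apply sphere_V; auto).
  set (A := 1 - x j ^ 2).
  assert (HA : A + x j ^ 2 = 1) by (unfold A; ring).
  assert (HA0 : 0 < A + x j ^ 2) by lra.
  destruct (D2_data (ext n f) x j (Smooth_Sm0 _ _ Hf) (Smooth_Sm0 _ _ (Smooth_partial _ _ _ Hj Hf)) HV Hj) as [Dg Dg2].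
  assert (Eg : line (ext n f) x j (x j) = ext n f x) by (unfold line; rewrite upd_id; auto).
  assert (Eg1 : Deriv (line (ext n f) x j) (x j) = partial j (ext n f) x) by reflexivity.
  destruct (Nat.eq_dec j i) as [e|e].
  - subst j.
    replace (fun t => upd x i t i * / sqrt (A + t^2) * line (ext n f) x i t) with
      (fun t => (t / sqrt (A + t^2)) * line (ext n f) x i t)
      by (apply functional_extensionality; intro t; rewrite upd_same; auto).
    rewrite (D2_mult (fun t => t / sqrt (A + t^2)) (line (ext n f) x i)
                     (fun t => A * (/ sqrt (A + t^2))^3) (Deriv (line (ext n f) x i)) (x i)
                     (- 3 * A * x i * (/ sqrt (A + x i^2))^5) (partial i (partial i (ext n f)) x)).
    + rewrite Eg, Eg1. unfold Rdiv. rewrite sqrt1'; auto. unfold A. ring.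
    + apply near_and; auto. eapply near_mono; [|apply (near_pos A (x i) HA0)]. intros; apply d_R1a; auto.
    + apply d_R1a'; auto.
    + auto.
  - replace (fun t => upd x j t i * / sqrt (A + t^2) * line (ext n f) x j t) with
      (fun t => (x i / sqrt (A + t^2)) * line (ext n f) x j t)
      by (apply functional_extensionality; intro t; rewrite upd_other; auto).
    rewrite (D2_mult (fun t => x i / sqrt (A + t^2)) (line (ext n f) x j)
                     (fun t => - x i * t * (/ sqrt (A + t^2))^3) (Deriv (line (ext n f) x j)) (x j)
                     (- x i * (/ sqrt (A + x j^2))^3 + 3 * x i * x j^2 * (/ sqrt (A + x j^2))^5)
                     (partial j (partial j (ext n f)) x)).
    + rewrite Eg, Eg1. unfold Rdiv. rewrite sqrt1'; auto. ring.
    + apply near_and; auto. eapply near_mono; [|apply (near_pos A (x j) HA0)]. intros; apply d_R1b; auto.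
    + apply d_R1b'; auto.
    + auto.
Qed.


Lemma sum_comb_gen (a b c d : R) (u v w z : nat -> R) i m :
  sum_f_R0 (fun j => a + b * u j + c * v j + d * w j + (if Nat.eq_dec j i then z j else 0)) m =
  a * INR (S m) + b * sum_f_R0 u m + c * sum_f_R0 v m + d * sum_f_R0 w m
  + (if Compare_dec.le_lt_dec i m then z i else 0).
Proof.
  induction m.
  - destruct (Compare_dec.le_lt_dec i 0); cbn [sum_f_R0]; destruct (Nat.eq_dec 0 i); subst; try lia; simpl; ring.
  - rewrite !tech5, IHm, (S_INR (S m)).
    destruct (Nat.eq_dec (S m) i); destruct (Compare_dec.le_lt_dec i m);
    destruct (Compare_dec.le_lt_dec i (S m)); subst; try lia; ring.
Qed.

Lemma sum_comb (a b c d : R) (u v w z : nat -> R) i m : (i <= m)%nat ->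
  sum_f_R0 (fun j => a + b * u j + c * v j + d * w j + (if Nat.eq_dec j i then z j else 0)) m =
  a * INR (S m) + b * sum_f_R0 u m + c * sum_f_R0 v m + d * sum_f_R0 w m + z i.
Proof. intros H; rewrite sum_comb_gen. destruct (Compare_dec.le_lt_dec i m); auto; lia. Qed.

Lemma sphere_ext f x : on_sphere n x -> ext n f x = f x.
Proof. intros H; rewrite ext_hat, sphere_hat; auto. Qed.

Lemma euler0 f x : SS f -> V x -> sum_f_R0 (fun j => x j * partial j (ext n f) x) n = 0.
Proof. intros Hf Hx. rewrite (euler n 0 (ext n f) x). simpl; ring. apply HomN_ext. apply Hf. auto. Qed.

Lemma R1 i f x : (i <= n)%nat -> SS f -> on_sphere n x ->
  lapS n (mulx i f) x = x i * lapS n f x - INR n * x i * f x + 2 * Dop i f x.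
Proof.
  intros Hi Hf Hx. assert (HV : V x) by (apply sphere_V; auto).
  unfold lapS at 1. rewrite (sum_eq _ (fun j => (- x i * ext n f x) + (3 * x i * ext n f x) * (x j ^ 2)
       + (- 2 * x i) * (x j * partial j (ext n f) x) + x i * partial j (partial j (ext n f)) x
       + (if Nat.eq_dec j i then (-2 * x j * ext n f x + 2 * partial j (ext n f) x) else 0))).
  2:{ intros j Hj. rewrite R1_term; auto. destruct (Nat.eq_dec j i); ring. }
  rewrite sum_comb; auto. rewrite euler0; auto. fold (rho x). rewrite sphere_rho; auto.
  rewrite sphere_ext; auto. unfold lapS, D.Dop. rewrite S_INR. ring.
Qed.

Lemma DL_sum (G : nat -> vec -> R) y i m : (forall k, (k <= m)%nat -> DL (G k) y i) ->
  DL (fun z => sum_f_R0 (fun k => G k z) m) y i.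
Proof.
  induction m; intros H. apply H; auto.
  apply (DL_plus (fun z => sum_f_R0 (fun k => G k z) m) (G (S m))). apply IHm; auto. apply H; auto.
Qed.

Lemma partial_sum_at (G : nat -> vec -> R) y i m : (forall k, (k <= m)%nat -> DL (G k) y i) ->
  partial i (fun z => sum_f_R0 (fun k => G k z) m) y = sum_f_R0 (fun k => partial i (G k) y) m.
Proof.
  induction m; intros H. reflexivity.
  cbn [sum_f_R0]. rewrite (partial_plus_at (fun z => sum_f_R0 (fun k => G k z) m) (G (S m))).
  rewrite IHm; auto. apply DL_sum; auto. apply H; auto.
Qed.

Lemma R2_term i f x j : (i <= n)%nat -> (j <= n)%nat -> on_sphere n x -> SS f ->
  partial j (partial j (ext n (Dop i f))) x =
    (1 - x j ^ 2) * partial i (ext n f) x + 2 * x j * partial j (partial i (ext n f)) x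
    + partial j (partial j (partial i (ext n f))) x.
Proof.
  intros Hi Hj Hx Hf. rewrite partial2_eq.
  assert (HV : V x) by (apply sphere_V; auto).
  set (A := 1 - x j ^ 2).
  assert (HA : A + x j ^ 2 = 1) by (unfold A; ring).
  assert (HA0 : 0 < A + x j ^ 2) by lra.
  set (Fi := partial i (ext n f)).
  assert (SFi : Smooth Fi) by (apply Smooth_partial; auto).
  rewrite (D2_local _ (fun t => sqrt (A + t^2) * line Fi x j t)).
  2:{ eapply near_mono; [|apply (line_V n x j HV Hj)]. intros t Ht. unfold line.
      rewrite ext_Dop; auto. rewrite nrm_rho, rho_upd, sphere_rho; auto. }
  destruct (D2_data Fi x j (Smooth_Sm0 _ _ SFi) (Smooth_Sm0 _ _ (Smooth_partial _ _ _ Hj SFi)) HV Hj) as [Dg Dg2].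
  rewrite (D2_mult (fun t => sqrt (A + t^2)) (line Fi x j) (fun t => t * / sqrt (A + t^2)) (Deriv (line Fi x j)) (x j)
     (A * (/ sqrt (A + x j^2))^3) (partial j (partial j Fi) x)).
  - unfold line at 1. rewrite upd_id. change (Deriv (line Fi x j) (x j)) with (partial j Fi x).
    rewrite HA, sqrt_1, Rinv_1. unfold A. ring.
  - apply near_and; auto. eapply near_mono; [|apply (near_pos A (x j) HA0)]. intros; apply d_sqrt; auto.
  - apply d_R2'; auto.
  - auto.
Qed.

Lemma R2 i f x : (i <= n)%nat -> SS f -> on_sphere n x ->
  lapS n (Dop i f) x = Dop i (lapS n f) x + (INR n - 2) * Dop i f x - 2 * x i * lapS n f x.
Proof.
  intros Hi Hf Hx. assert (HV : V x) by (apply sphere_V; auto).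
  set (F := ext n f).
  assert (SFi : Smooth (partial i F)) by (apply Smooth_partial; auto).
  unfold lapS at 1. rewrite (sum_eq _ (fun j => partial i F x + (- partial i F x) * (x j ^ 2)
       + 2 * (x j * partial j (partial i F) x) + 1 * partial j (partial j (partial i F)) x
       + (if Nat.eq_dec j i then 0 else 0))).
  2:{ intros j Hj. rewrite R2_term; auto. destruct (Nat.eq_dec j i); fold F; ring. }
  rewrite sum_comb; auto. fold (rho x). rewrite sphere_rho; auto.
  rewrite (euler n 1 (partial i F) x); auto.
  2:{ apply HomN_partial; auto. apply HomN_ext. apply Smooth_Sm0; auto. }
  rewrite (sum_eq _ (fun j => partial i (partial j (partial j F)) x)).
  2:{ intros j Hj. rewrite (partial_EqV n (partial j (partial i F)) (partial i (partial j F))); auto.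
      - apply (schwarz n (partial j F) x); auto. apply Smooth_partial; auto.
      - intros y Hy. apply (schwarz n F y); auto. }
  replace (Dop i (lapS n f) x) with (Deriv (line (ext n (lapS n f)) x i) (x i)) by reflexivity.
  rewrite (Deriv_local _ (fun t => ((rho x - x i ^ 2) + t^2) *
        line (fun y => sum_f_R0 (fun j => partial j (partial j F) y) n) x i t)).
  2:{ eapply near_mono; [|apply (line_V n x i HV Hi)]. intros t Ht. unfold line.
      rewrite ext_lapS; auto. rewrite rho_upd; auto. }
  set (S := fun y => sum_f_R0 (fun j => partial j (partial j F) y) n).
  assert (SS0 : Smooth S).
  { apply Smooth_sum. intros j Hj. apply Smooth_partial; auto. apply Smooth_partial; auto. }
  assert (DS : DL S x i) by (apply (Smooth_Sm0 _ _ SS0); auto).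
  rewrite (Deriv_eq _ _ (2 * x i * S x + (rho x - x i ^ 2 + x i ^ 2) * partial i S x)).
  2:{ generalize (derivable_pt_lim_mult (fun t => rho x - x i ^ 2 + t^2) (line S x i) (x i) _ _
        (d_poly2 _ (x i)) (DL_partial _ _ _ DS)). unfold mult_fct, line. rewrite upd_id. auto. }
  unfold S at 2. rewrite partial_sum_at.
  2:{ intros k Hk. apply (Smooth_Sm0 _ _ (Smooth_partial _ _ _ Hk (Smooth_partial _ _ _ Hk Hf))); auto. }
  rewrite sphere_rho; auto. unfold S, lapS, D.Dop. fold F. rewrite S_INR.
  replace (sum_f_R0 (fun k => partial i (fun z => partial k (partial k F) z) x) n) with
    (sum_f_R0 (fun j => partial i (partial j (partial j F)) x) n) by reflexivity.
  change (INR 1) with 1. ring.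
Qed.

Lemma E1_sum f x : SS f -> on_sphere n x -> sum_f_R0 (fun i => x i * Dop i f x) n = 0.
Proof. intros Hf Hx. apply euler0; auto. apply sphere_V; auto. Qed.

End F.

End F.
Import F.

Module G.

Section G.
Variable n : nat.
Local Notation V := (V n).
Local Notation EqV := (EqV n).
Local Notation Smooth := (Smooth n).
Local Notation SS := (SS n).
Local Notation Dop := (Dop n).

Lemma ext_congr f g : (forall x, on_sphere n x -> f x = g x) -> EqV (ext n f) (ext n g).
Proof. intros H y Hy. rewrite !ext_hat. apply H. apply hat_sphere; auto. Qed.

Lemma lapS_congr f g x : EqV (ext n f) (ext n g) -> V x -> lapS n f x = lapS n g x.
Proof. intros E Hx. unfold lapS. apply sum_eq. intros j Hj.
  apply (partial_EqV n); auto. apply (partial_EqV n); auto. Qed.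

Lemma Dop_congr i f g x : (i <= n)%nat -> EqV (ext n f) (ext n g) -> V x -> Dop i f x = Dop i g x.
Proof. intros Hi E Hx. unfold D.Dop. apply (partial_EqV n); auto. Qed.

Lemma partial_lin_at (F G : vec -> R) y i a b : DL F y i -> DL G y i ->
  partial i (fun z => a * F z + b * G z) y = a * partial i F y + b * partial i G y.
Proof.
  intros HF HG. apply Deriv_eq.
  apply (derivable_pt_lim_plus (fun t => a * line F y i t) (fun t => b * line G y i t)).
  apply (derivable_pt_lim_scal (line F y i)). apply DL_partial; auto.
  apply (derivable_pt_lim_scal (line G y i)). apply DL_partial; auto.
Qed.

Lemma sum_lin2 a b (u v : nat -> R) m :
  sum_f_R0 (fun j => a * u j + b * v j) m = a * sum_f_R0 u m + b * sum_f_R0 v m.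
Proof. induction m. simpl; ring. rewrite !tech5, IHm. ring. Qed.

Lemma lapS_lin a b f g x : SS f -> SS g -> V x ->
  lapS n (fun z => a * f z + b * g z) x = a * lapS n f x + b * lapS n g x.
Proof.
  intros Hf Hg Hx. unfold lapS. rewrite <- sum_lin2. apply sum_eq. intros j Hj.
  change (ext n (fun z => a * f z + b * g z)) with (fun y => a * ext n f y + b * ext n g y).
  rewrite (partial_EqV n _ (fun y => a * partial j (ext n f) y + b * partial j (ext n g) y)); auto.
  - apply partial_lin_at.
    apply (Smooth_Sm0 _ _ (Smooth_partial _ _ _ Hj Hf)); auto.
    apply (Smooth_Sm0 _ _ (Smooth_partial _ _ _ Hj Hg)); auto.
  - intros y Hy. apply partial_lin_at. apply (Smooth_Sm0 _ _ Hf); auto. apply (Smooth_Sm0 _ _ Hg); auto.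
Qed.

Lemma Dop_lin i a b f g x : (i <= n)%nat -> SS f -> SS g -> V x ->
  Dop i (fun z => a * f z + b * g z) x = a * Dop i f x + b * Dop i g x.
Proof.
  intros Hi Hf Hg Hx. unfold D.Dop.
  change (ext n (fun z => a * f z + b * g z)) with (fun y => a * ext n f y + b * ext n g y).
  apply partial_lin_at. apply (Smooth_Sm0 _ _ Hf); auto. apply (Smooth_Sm0 _ _ Hg); auto.
Qed.

Lemma iterD_app l i F : iterD (l ++ i :: nil) F = iterD l (partial i F).
Proof. unfold iterD. rewrite fold_right_app. reflexivity. Qed.

Lemma punct_Sm N : forall F, smooth_punctured n F -> Sm n N F.
Proof.
  induction N; intros F HF.
  - intros y [Hy1 Hy2]. destruct (HF nil (Forall_nil _) y Hy1 Hy2) as [C D]. split; auto.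
  - split.
    + intros y [Hy1 Hy2]. destruct (HF nil (Forall_nil _) y Hy1 Hy2) as [C D]. split; auto.
    + intros i Hi. apply IHN. intros l Hl y Hy1 Hy2. rewrite <- iterD_app. apply HF; auto.
      apply Forall_app; split; auto.
Qed.

Definition cc (k : nat) := (INR n - 2 * INR k) * (INR n + 2 * INR k - 2) / 4.

Lemma GJMS_S u k : GJMS n (S k) u = fun x => - lapS n (GJMS n k u) x + cc (S k) * GJMS n k u x.
Proof. reflexivity. Qed.

Lemma claim_GJMS u i : SS u -> (i <= n)%nat -> forall k x, on_sphere n x ->
  GJMS n k (mulx i u) x = x i * (GJMS n k u x + INR k * (INR n + 2 * INR k - 2) * GJMS n (k - 1) u x)
     - 2 * INR k * Dop i (GJMS n (k - 1) u) x.
Proof.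
  intros Hu Hi k. induction k; intros x Hx.
  - simpl. unfold mulx. ring.
  - assert (HV : V x) by (apply sphere_V; auto).
    set (a := fun z => 1 * GJMS n k u z + (INR k * (INR n + 2 * INR k - 2)) * GJMS n (k - 1) u z).
    set (b := GJMS n (k - 1) u).
    assert (Sa : SS a) by (apply SS_lin; apply SS_GJMS; auto).
    assert (Sb : SS b) by (apply SS_GJMS; auto).
    rewrite GJMS_S.
    rewrite (lapS_congr _ (fun z => 1 * mulx i a z + (- 2 * INR k) * Dop i b z)).
    2:{ apply ext_congr. intros z Hz. rewrite IHk; auto. unfold mulx, a, b. ring. }
    2: auto.
    rewrite IHk; auto.
    rewrite lapS_lin; auto. 2: apply SS_mulx; auto. 2: apply SS_Dop; auto.
    rewrite F.R1, F.R2; auto.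
    unfold a, b. clear a b Sa Sb.
    rewrite lapS_lin; try apply SS_GJMS; auto.
    rewrite Dop_lin; try apply SS_GJMS; auto.
    destruct k.
    + change (GJMS n 1 u x) with (- lapS n (GJMS n 0 u) x + cc 1 * GJMS n 0 u x).
      change (INR 0) with 0. change (INR 1) with 1. change (1 - 1)%nat with 0%nat. change (0 - 1)%nat with 0%nat. ring.
    + replace (S k - 1)%nat with k in * by lia.
      assert (L1 : lapS n (GJMS n k u) x = cc (S k) * GJMS n k u x - GJMS n (S k) u x).
      { change (GJMS n (S k) u x) with (- lapS n (GJMS n k u) x + cc (S k) * GJMS n k u x); ring. }
      assert (L2 : lapS n (GJMS n (S k) u) x = cc (S (S k)) * GJMS n (S k) u x - GJMS n (S (S k)) u x).
      { change (GJMS n (S (S k)) u x) with (- lapS n (GJMS n (S k) u) x + cc (S (S k)) * GJMS n (S k) u x); ring. }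
      assert (L3 : Dop i (lapS n (GJMS n k u)) x = cc (S k) * Dop i (GJMS n k u) x - Dop i (GJMS n (S k) u) x).
      { replace (lapS n (GJMS n k u)) with (fun z => cc (S k) * GJMS n k u z + (-1) * GJMS n (S k) u z).
        rewrite Dop_lin; try apply SS_GJMS; auto. ring.
        apply functional_extensionality; intro z.
        change (GJMS n (S k) u z) with (- lapS n (GJMS n k u) z + cc (S k) * GJMS n k u z); ring. }
      rewrite L1, L2, L3. unfold cc. replace (S (S k) - 1)%nat with (S k) by lia. rewrite !S_INR. field.
Qed.

Theorem main (k : nat) (u : vec -> R) (hu : smooth_sphere n u) (x : vec) (hx : on_sphere n x) :
  sum_f_R0 (fun i => x i * (GJMS n k (mulx i u) x - x i * GJMS n k u x)) n
  = INR k * (INR n + 2 * INR k - 2) * GJMS n (k - 1) u x.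
Proof.
  assert (Hu : SS u).
  { intro N. apply punct_Sm. exact hu. }
  rewrite (sum_eq _ (fun i => (INR k * (INR n + 2 * INR k - 2) * GJMS n (k - 1) u x) * (x i ^ 2)
     + (- 2 * INR k) * (x i * Dop i (GJMS n (k - 1) u) x))).
  2:{ intros i Hi. rewrite (claim_GJMS u i Hu Hi k x hx). ring. }
  rewrite sum_lin2. rewrite E1_sum. 2: apply SS_GJMS; auto. 2: auto.
  fold (C.rho n x). rewrite sphere_rho; auto. ring.
Qed.
End G.

End G.
Import G.

Theorem theorem1p3 (n k : nat) (hn : (2 <= n)%nat) (hk : (1 <= k)%nat)
  (u : vec -> R) (hu : smooth_sphere n u) (x : vec) (hx : on_sphere n x) :
  sum_f_R0 (fun i => x i * (GJMS n k (mulx i u) x - x i * GJMS n k u x)) n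
  = INR k * (INR n + 2 * INR k - 2) * GJMS n (k - 1) u x.
Proof.
  exact (main n k u hu x hx).
Qed.
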